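(* Let $\mathcal{H}$ be a complex Hilbert space, $A\in\mathcal{B}(\mathcal{H})$ positive and $S\in\mathcal{B}_A(\mathcal{H})$. Then $$d\omega_A^2(S)\le\|S\|_A^4+2\|S\|_A^2-\sqrt{c_A\left(S^{\sharp_A}S\right)c_A\left(SS^{\sharp_A}\right)}.$$
   Context: $\mathcal{B}(\mathcal{H})$ denotes the bounded linear operators on $\mathcal{H}$. For positive $A$, $\langle x,z\rangle_A=\langle Ax,z\rangle$ and $\|z\|_A=\|A^{1/2}z\|$. $\mathcal{B}_A(\mathcal{H})$ is the set of $S\in\mathcal{B}(\mathcal{H})$ for which some $R\in\mathcal{B}(\mathcal{H})$ satisfies $AR=S^*A$; for such $S$, $S^{\sharp_A}=A^{\dagger}S^*A$ with $A^\dagger$ the Moore–Penrose inverse of $A$. For operators $T$ bounded with respect to $\|\cdot\|_A$: $\|T\|_A=\sup_{\|z\|_A=1}\|Tz\|_A$, $c_A(T)=\inf_{\|z\|_A=1}|\langle Tz,z\rangle_A|$ ($A$-Crawford number), and $d\omega_A(T)=\sup_{\|z\|_A=1}(|\langle Tz,z\rangle_A|^2+\|Tz\|_A^4)^{1/2}$. *)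

(* Defs.v *)
From HB Require Import structures.
From mathcomp Require Import all_boot all_order all_algebra.
From mathcomp Require Import complex.
From mathcomp Require Import boolp classical_sets reals.
Import Order.TTheory GRing.Theory Num.Theory.

Set Implicit Arguments.
Unset Strict Implicit.
Unset Printing Implicit Defensive.

Local Open Scope ring_scope.
Local Open Scope classical_set_scope.

Section SemiHilbert.
Context {R : realType} {H : lmodType R[i]}.
Variable ip : H -> H -> R[i].

Definition is_inner_product : Prop :=
  [/\ (forall (a : R[i]) (x y z : H), ip (a *: x + y) z = a * ip x z + ip y z),
      (forall x y : H, ip x y = conjc (ip y x)),
      (forall x : H, 0 <= ip x x) &
      (forall x : H, ip x x = 0 -> x = 0)].

Definition hnorm (x : H) : R := Num.sqrt (complex.Re (ip x x)).

Definition is_complete : Prop :=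
  forall u : nat -> H,
    (forall e : R, 0 < e -> exists N : nat, forall m n : nat,
        (N <= m)%N -> (N <= n)%N -> hnorm (u m - u n) < e) ->
    exists l : H, forall e : R, 0 < e -> exists N : nat, forall n : nat,
        (N <= n)%N -> hnorm (u n - l) < e.

Definition is_complex_Hilbert : Prop := is_inner_product /\ is_complete.

Definition bounded_op (T : H -> H) : Prop :=
  (forall (a : R[i]) (x y : H), T (a *: x + y) = a *: T x + T y) /\
  exists M : R, forall x : H, hnorm (T x) <= M * hnorm x.

Definition positive_op (A : H -> H) : Prop :=
  bounded_op A /\ forall x : H, 0 <= ip (A x) x.

Definition is_adjoint (T Tstar : H -> H) : Prop :=
  forall x y : H, ip (T x) y = ip x (Tstar y).

Definition in_BA (A S Sstar : H -> H) : Prop :=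
  bounded_op S /\ exists Rop : H -> H, bounded_op Rop /\
    forall x : H, A (Rop x) = Sstar (A x).

(** Moore--Penrose inverse of A: for y in its domain R(A) + R(A)^perp,
    A^dagger y is the unique x in N(A)^perp with y - A x in R(A)^perp
    (equivalently A x = P_{closure R(A)} y). *)
Definition MP_value (A : H -> H) (y x : H) : Prop :=
  (forall z : H, A z = 0 -> ip x z = 0) /\
  (forall w : H, ip (y - A x) (A w) = 0).

Definition MPinv (A : H -> H) (y : H) : H := xget 0 [set x | MP_value A y x].

Definition A_sharp (A Sstar : H -> H) : H -> H := fun z => MPinv A (Sstar (A z)).

Definition A_ip (A : H -> H) (x z : H) : R[i] := ip (A x) z.
Definition A_norm (A : H -> H) (z : H) : R := Num.sqrt (complex.Re (A_ip A z z)).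

Definition A_sphere (A : H -> H) : set H := [set z | A_norm A z = 1].

Definition A_opnorm (A T : H -> H) : R :=
  sup [set A_norm A (T z) | z in A_sphere A].

Definition A_crawford (A T : H -> H) : R :=
  inf [set Normc.normc (A_ip A (T z) z) | z in A_sphere A].

Definition A_davis_wielandt_radius (A T : H -> H) : R :=
  sup [set Num.sqrt (Normc.normc (A_ip A (T z) z) ^+ 2 + A_norm A (T z) ^+ 4)
      | z in A_sphere A].

End SemiHilbert.

(* Main.v *)
Require Import Defs.
From mathcomp Require Import all_boot all_order all_algebra.
From mathcomp Require Import complex.
From mathcomp Require Import boolp classical_sets reals.
From mathcomp Require Import ring lra.
Import Order.TTheory GRing.Theory Num.Theory.
Local Open Scope ring_scope.


Section Form.
Variables (R : realType) (H : lmodType R[i]) (f : H -> H -> R[i]).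
Hypothesis fL : forall (a : R[i]) x y z, f (a *: x + y) z = a * f x z + f y z.
Hypothesis fH : forall x y, f x y = conjc (f y x).
Hypothesis fP : forall x, 0 <= f x x.

Lemma f0l z : f 0 z = 0.
Proof.
have := fL 1 0 0 z; rewrite scaler0 addr0 mul1r => h.
by apply: (addrI (f 0 z)); rewrite addr0 -h.
Qed.

Lemma fZl a x z : f (a *: x) z = a * f x z.
Proof. by rewrite -[a *: x]addr0 fL f0l addr0. Qed.

Lemma fDl x y z : f (x + y) z = f x z + f y z.
Proof. by have := fL 1 x y z; rewrite scale1r mul1r. Qed.

Lemma fZr a x z : f z (a *: x) = conjc a * f z x.
Proof.
rewrite [LHS]fH fZl [f z x]fH; case: a => a1 a2; case: (f x z) => b1 b2 /=.
by congr Complex; ring.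
Qed.

Lemma fDr x y z : f z (x + y) = f z x + f z y.
Proof.
rewrite [LHS]fH fDl [f z x]fH [f z y]fH; case: (f x z) => a1 a2; case: (f y z) => b1 b2 /=.
by congr Complex; ring.
Qed.

Lemma ReH x y : complex.Re (f x y) = complex.Re (f y x).
Proof. by rewrite fH; case: (f y x). Qed.

Lemma ReZl (s : R) x z : complex.Re (f (Complex s 0 *: x) z) = s * complex.Re (f x z).
Proof. rewrite fZl; case: (f x z) => a b /=; ring. Qed.

Lemma ReDl x y z : complex.Re (f (x + y) z) = complex.Re (f x z) + complex.Re (f y z).
Proof. rewrite fDl; by case: (f x z); case: (f y z). Qed.

Lemma ReZr (s : R) x z : complex.Re (f z (Complex s 0 *: x)) = s * complex.Re (f z x).
Proof. by rewrite ReH ReZl ReH. Qed.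

Lemma ReDr x y z : complex.Re (f z (x + y)) = complex.Re (f z x) + complex.Re (f z y).
Proof. by rewrite ReH ReDl ReH (ReH y). Qed.

Lemma Re_ge0 x : 0 <= complex.Re (f x x).
Proof. by move: (fP x); rewrite lecE => /andP[]. Qed.

Lemma Im_xx x : complex.Im (f x x) = 0.
Proof. by move: (fP x); rewrite lecE => /andP[/eqP]. Qed.

Lemma fxx_real x : f x x = Complex (complex.Re (f x x)) 0.
Proof. by move: (Im_xx x); case: (f x x) => a b /= ->. Qed.

Lemma quad (s t : R) x y :
  0 <= s ^+ 2 * complex.Re (f x x) + 2 * s * t * complex.Re (f x y)
       + t ^+ 2 * complex.Re (f y y).
Proof.
have := Re_ge0 (Complex s 0 *: x + Complex t 0 *: y).
rewrite !ReDl !ReZl !ReDr !ReZr (ReH y x).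
set Q := complex.Re (f x x); set p := complex.Re (f x y); set Y := complex.Re (f y y).
move=> h; apply: le_trans h _; rewrite le_eqVlt; apply/orP; left; apply/eqP; ring.
Qed.

Lemma CS_re x y :
  complex.Re (f x y) ^+ 2 <= complex.Re (f x x) * complex.Re (f y y).
Proof.
set Q := complex.Re (f x x); set p := complex.Re (f x y); set Y := complex.Re (f y y).
have hQ : 0 <= Q by apply: Re_ge0.
have hY : 0 <= Y by apply: Re_ge0.
have h1 := quad Y (- p) x y.
have h2 := quad p (- Q) x y.
have h3 := quad 1 (- p) x y.
rewrite -/Q -/p -/Y in h1 h2 h3.
have [Ypos|Y0] := ltP 0 Y.
  nra.
have [Qpos|Q0] := ltP 0 Q.
  nra.
have -> : Y = 0 by apply/le_anti/andP.
have -> : Q = 0 by apply/le_anti/andP.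
nra.
Qed.

Lemma CS x y :
  Normc.normc (f x y) ^+ 2 <= complex.Re (f x x) * complex.Re (f y y).
Proof.
have e1 : complex.Re (f (conjc (f x y) *: x) y)
    = complex.Re (f x y) ^+ 2 + complex.Im (f x y) ^+ 2.
  by rewrite fZl; case: (f x y) => a b /=; ring.
have e2 : complex.Re (f (conjc (f x y) *: x) (conjc (f x y) *: x))
    = (complex.Re (f x y) ^+ 2 + complex.Im (f x y) ^+ 2) * complex.Re (f x x).
  by rewrite fZl fZr (fxx_real x) conjcK; case: (f x y) => a b /=; ring.
have hn : Normc.normc (f x y) ^+ 2 = complex.Re (f x y) ^+ 2 + complex.Im (f x y) ^+ 2.
  by rewrite /Normc.normc; case: (f x y) => a b /=; rewrite sqr_sqrtr //; nra.
have h := CS_re (conjc (f x y) *: x) y.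
rewrite e1 e2 in h; rewrite hn.
move: h; set n := complex.Re (f x y) ^+ 2 + complex.Im (f x y) ^+ 2 => h.
have hn0 : 0 <= n by rewrite /n; nra.
have hQ := Re_ge0 x; have hY := Re_ge0 y.
have [npos|n0] := ltP 0 n.
  nra.
have -> : n = 0 by apply/le_anti/andP.
nra.
Qed.

End Form.
Arguments f0l {R H f}.
Arguments fZl {R H f}.
Arguments fDl {R H f}.
Arguments fZr {R H f}.
Arguments fDr {R H f}.
Arguments ReH {R H f}.
Arguments ReZl {R H f}.
Arguments ReDl {R H f}.
Arguments ReZr {R H f}.
Arguments ReDr {R H f}.
Arguments Re_ge0 {R H f}.
Arguments Im_xx {R H f}.
Arguments fxx_real {R H f}.
Arguments quad {R H f}.
Arguments CS_re {R H f}.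
Arguments CS {R H f}.


Fixpoint itP {T : Type} (B : T -> T) (n : nat) : T -> T :=
  if n is n'.+1 then itP B n' \o itP B n' else B.

Lemma bern (R : realType) (e : R) (N : nat) : 0 <= e -> 1 + N%:R * e <= (1 + e) ^+ N.
Proof.
move=> he; elim: N => [|N IH]; first by rewrite mul0r addr0 expr0.
rewrite exprS -natr1; have h0 : 0 <= (1 + e) ^+ N by apply: exprn_ge0; lra.
have hN : 0 <= N%:R :> R by apply: ler0n.
nra.
Qed.

Section Main.
Variables (R : realType) (H : lmodType R[i]) (ip : H -> H -> R[i]).
Variables (A S Sstar Rop : H -> H).
Hypothesis hip : is_inner_product ip.
Hypothesis hA : positive_op ip A.
Hypothesis hadj : is_adjoint ip S Sstar.
Hypothesis hS : bounded_op ip S.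
Hypothesis hR : bounded_op ip Rop.
Hypothesis hAR : forall x, A (Rop x) = Sstar (A x).

Lemma ipL a x y z : ip (a *: x + y) z = a * ip x z + ip y z.
Proof. by case: hip => h _ _ _; apply: h. Qed.
Lemma ipH x y : ip x y = conjc (ip y x).
Proof. by case: hip => _ h _ _; apply: h. Qed.
Lemma ipP x : 0 <= ip x x.
Proof. by case: hip => _ _ h _; apply: h. Qed.
Lemma ipD x : ip x x = 0 -> x = 0.
Proof. by case: hip => _ _ _; apply. Qed.

Lemma lin0 T : bounded_op ip T -> T 0 = 0.
Proof.
case=> hT _; have := hT 1 0 0; rewrite scaler0 addr0 scale1r => h.
by apply: (addrI (T 0)); rewrite addr0 -h.
Qed.
Lemma linZ T a x : bounded_op ip T -> T (a *: x) = a *: T x.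
Proof. move=> hT; have := hT.1 a x 0; rewrite !addr0 lin0 // addr0. done. Qed.
Lemma linD T x y : bounded_op ip T -> T (x + y) = T x + T y.
Proof. by move=> hT; have := hT.1 1 x y; rewrite !scale1r. Qed.
Lemma linB T x y : bounded_op ip T -> T (x - y) = T x - T y.
Proof. by move=> hT; rewrite linD // -scaleN1r linZ // scaleN1r. Qed.

Let hAb : bounded_op ip A := hA.1.

Lemma fAL a x y z : ip (A (a *: x + y)) z = a * ip (A x) z + ip (A y) z.
Proof. by rewrite linD // linZ // ipL. Qed.

Lemma imA z : complex.Im (ip (A z) z) = 0.
Proof. by move: (hA.2 z); rewrite lecE => /andP[/eqP]. Qed.

Lemma fAH x y : ip (A x) y = conjc (ip (A y) x).
Proof.
have h1 := imA (x + y).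
rewrite linD // (fDl ipL) !(fDr ipL ipH) in h1.
have h2 := imA (x + Complex 0 1 *: y).
rewrite linD // linZ // (fDl ipL) !(fDr ipL ipH) !(fZl ipL) !(fZr ipL ipH) in h2.
move: h1 h2 (imA x) (imA y).
case: (ip (A x) x) => a1 a2; case: (ip (A x) y) => b1 b2;
case: (ip (A y) x) => c1 c2; case: (ip (A y) y) => d1 d2 /= h1 h2 h3 h4.
congr Complex; lra.
Qed.

Lemma fAP x : 0 <= ip (A x) x.
Proof. exact: hA.2. Qed.

Definition q z := complex.Re (ip (A z) z).

Lemma q_ge0 z : 0 <= q z.
Proof. exact: (Re_ge0 (f := fun x y => ip (A x) y) fAP z). Qed.

Lemma CSA x y : Normc.normc (ip (A x) y) ^+ 2 <= q x * q y.
Proof. exact: (CS (f := fun x y => ip (A x) y) fAL fAH fAP). Qed.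

Lemma CSA_re x y : complex.Re (ip (A x) y) ^+ 2 <= q x * q y.
Proof. exact: (CS_re (f := fun x y => ip (A x) y) fAL fAH fAP). Qed.

Lemma bnd1 T : bounded_op ip T ->
  exists M : R, 1 <= M /\ forall x, hnorm ip (T x) <= M * hnorm ip x.
Proof.
case=> _ [M hM]; exists (`|M| + 1); split.
  by rewrite lerDr.
move=> x; apply: le_trans (hM x) _; apply: ler_wpM2r.
  exact: sqrtr_ge0.
by apply: le_trans (ler_norm M) _; rewrite lerDl.
Qed.

Lemma hnorm_ge0 x : 0 <= hnorm ip x.
Proof. exact: sqrtr_ge0. Qed.

Lemma hnorm_sq x : hnorm ip x ^+ 2 = complex.Re (ip x x).
Proof. by rewrite /hnorm sqr_sqrtr // (Re_ge0 ipP). Qed.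

Lemma adjS w v : ip (Sstar w) v = ip w (S v).
Proof. by rewrite ipH -hadj -ipH. Qed.

Definition B := Rop \o S.

Lemma Bform u v : ip (A (B u)) v = ip (A (S u)) (S v).
Proof. by rewrite /B /= hAR adjS. Qed.

Lemma B_sa u v : ip (A (B u)) v = ip (A u) (B v).
Proof. by rewrite Bform fAH [RHS]fAH Bform -fAH. Qed.

Lemma itP_sa n u v : ip (A (itP B n u)) v = ip (A u) (itP B n v).
Proof.
elim: n u v => [|n IH] u v /=; first exact: B_sa.
by rewrite IH IH.
Qed.

Lemma q_step n x : q (itP B n x) ^+ 2 <= q (itP B n.+1 x) * q x.
Proof.
have := CSA_re (itP B n (itP B n x)) x.
by rewrite /q /= itP_sa.
Qed.

End Main.
Arguments ipL {R H ip}.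
Arguments ipH {R H ip}.
Arguments ipP {R H ip}.
Arguments ipD {R H ip}.
Arguments lin0 {R H ip T}.
Arguments linZ {R H ip T}.
Arguments linD {R H ip T}.
Arguments linB {R H ip T}.
Arguments fAL {R H ip A}.
Arguments imA {R H ip A}.
Arguments fAH {R H ip A}.
Arguments fAP {R H ip A}.
Arguments q {R H}.
Arguments q_ge0 {R H ip A}.
Arguments CSA {R H ip A}.
Arguments CSA_re {R H ip A}.
Arguments bnd1 {R H ip T}.
Arguments hnorm_ge0 {R H}.
Arguments hnorm_sq {R H ip}.
Arguments adjS {R H ip S Sstar}.
Arguments B {R H}.
Arguments Bform {R H ip A S Sstar Rop}.
Arguments B_sa {R H ip A S Sstar Rop}.
Arguments itP_sa {R H ip A S Sstar Rop}.
Arguments q_step {R H ip A S Sstar Rop}.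

Section Main2.
Variables (R : realType) (H : lmodType R[i]) (ip : H -> H -> R[i]).
Variables (A S Sstar Rop : H -> H).
Hypothesis hip : is_inner_product ip.
Hypothesis hA : positive_op ip A.
Hypothesis hadj : is_adjoint ip S Sstar.
Hypothesis hS : bounded_op ip S.
Hypothesis hR : bounded_op ip Rop.
Hypothesis hAR : forall x, A (Rop x) = Sstar (A x).

Local Notation q := (q ip A).
Local Notation B := (B S Rop).

Lemma q_le_hnorm : exists a : R, 1 <= a /\ forall u, q u <= a * hnorm ip u ^+ 2.
Proof.
have [a [ha hAa]] := bnd1 hA.1.
exists a; split => // u.
have h := CS_re (ipL hip) (ipH hip) (ipP hip) (A u) u.
rewrite -!hnorm_sq // in h.
have hk := hAa u.
have h0 := hnorm_ge0 ip u; have k0 := hnorm_ge0 ip (A u).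
have q0 := q_ge0 hA u.
rewrite /q in q0 *.
set Q := complex.Re (ip (A u) u) in h q0 *.
set k := hnorm ip (A u) in h hk k0 *.
set hh := hnorm ip u in h hk h0 *.
have e1 : Q <= k * hh.
  by rewrite -ler_sqr ?nnegrE ?mulr_ge0 // exprMn.
apply: le_trans e1 _; rewrite expr2 mulrA; apply: ler_wpM2r => //.
Qed.

Lemma itP_hn : exists b : R, 1 <= b /\
  forall n x, hnorm ip (itP B n x) <= b ^+ (2 ^ n) * hnorm ip x.
Proof.
have [mr [hmr hR']] := bnd1 hR.
have [ms [hms hS']] := bnd1 hS.
exists (mr * ms); split; first nra.
move=> n; elim: n => [|n IH] x /=.
  rewrite expn0 expr1 /B /=; apply: le_trans (hR' _) _.
  rewrite -mulrA; apply: ler_wpM2l; [lra | exact: hS'].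
apply: le_trans (IH _) _.
have h1 : 0 <= (mr * ms) ^+ (2 ^ n) by apply: exprn_ge0; nra.
by rewrite expnS mul2n -addnn exprD -mulrA; apply: ler_wpM2l => //.
Qed.

Lemma key : exists b : R, 0 <= b /\ forall x, q (B x) <= b ^+ 2 * q x.
Proof.
have [a [ha hqa]] := q_le_hnorm.
have [b [hb hbn]] := itP_hn.
exists b; split; first lra.
move=> x.
set Q := q x; set G := q (B x).
have hQ0 : 0 <= Q := q_ge0 hA x.
have hG0 : 0 <= G := q_ge0 hA (B x).
have [Qpos|Q0] := ltP 0 Q; last first.
  have hQ : Q = 0 by apply/le_anti/andP.
  have := q_step hip hA hadj hAR 0 x.
  rewrite /= -/Q -/G hQ !mulr0 => hG; nra.
rewrite leNgt; apply/negP => hGd.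
set d := b ^+ 2 * Q.
have dpos : 0 < d by rewrite /d; apply: mulr_gt0 => //; apply: exprn_gt0; lra.
set r := G / d.
have hGr : G = r * d by rewrite /r divfK // gt_eqF.
have r1 : 1 < r by rewrite /r ltr_pdivlMr // mul1r.
have hd : d = b ^+ 2 * Q by [].
clearbody r d.
set hh := hnorm ip x.
have c1 : forall n, G ^+ (2 ^ n) * Q <= q (itP B n x) * Q ^+ (2 ^ n).
  elim=> [|n IH]; first by rewrite expn0 !expr1 /= mulrC.
  have st := q_step hip hA hadj hAR n x; rewrite -/Q in st.
  have X0 : 0 <= G ^+ (2 ^ n) by apply: exprn_ge0.
  have Y0 : 0 <= Q ^+ (2 ^ n) by apply: exprn_ge0.
  have a0 : 0 <= q (itP B n x) := q_ge0 hA _.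
  rewrite expnS mulnC !exprM.
  set X := G ^+ (2 ^ n) in X0 IH *; set Y := Q ^+ (2 ^ n) in Y0 IH *.
  set aa := q (itP B n x) in a0 IH st *.
  set cc := q (itP B n.+1 x) in st *.
  have e1 : (X * Q) ^+ 2 <= (aa * Y) ^+ 2.
    by rewrite ler_sqr ?nnegrE //; nra.
  have e2 : X ^+ 2 * Q * Q <= cc * Y ^+ 2 * Q by nra.
  by rewrite ler_pM2r in e2.
have c2 : forall n, q (itP B n x) <= a * hh ^+ 2 * (b ^+ 2) ^+ (2 ^ n).
  move=> n; apply: le_trans (hqa _) _.
  have := hbn n x; rewrite -/hh => hn.
  have h0 : 0 <= hnorm ip (itP B n x) := hnorm_ge0 ip _.
  have hh0 : 0 <= hh := hnorm_ge0 ip _.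
  rewrite -exprM mulnC exprM.
  have bb0 : 0 <= b ^+ (2 ^ n) by apply: exprn_ge0; lra.
  set bb := b ^+ (2 ^ n) in hn bb0 *.
  have : hnorm ip (itP B n x) ^+ 2 <= (bb * hh) ^+ 2.
    by rewrite ler_sqr ?nnegrE //; nra.
  rewrite exprMn => hh2.
  rewrite -mulrA [hh ^+ 2 * _]mulrC; apply: ler_wpM2l => //; lra.
have c3 : forall n, r ^+ (2 ^ n) * Q <= a * hh ^+ 2.
  move=> n; have := le_trans (c1 n) (ler_wpM2r (exprn_ge0 _ hQ0) (c2 n)).
  rewrite hGr hd [(r * _) ^+ _]exprMn [(b ^+ 2 * Q) ^+ _]exprMn.
  have up : 0 < (b ^+ 2) ^+ (2 ^ n) * Q ^+ (2 ^ n).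
    by apply: mulr_gt0; apply: exprn_gt0 => //; apply: exprn_gt0; lra.
  set u := r ^+ (2 ^ n) in up *; set v := (b ^+ 2) ^+ (2 ^ n) in up *.
  set w := Q ^+ (2 ^ n) in up *.
  move=> hh1.
  have : u * Q * (v * w) <= a * hh ^+ 2 * (v * w).
    by lra.
  by rewrite ler_pM2r.
set e := r - 1.
have epos : 0 < e by rewrite /e subr_gt0.
set C := a * hh ^+ 2 / (e * Q).
have C0 : 0 <= C.
  by rewrite /C divr_ge0 // ?mulr_ge0 ?exprn_ge0 ?hnorm_ge0 //; lra.
have hbd := archi_boundP C0.
set n := Num.Def.archi_bound C in hbd.
have hn2 : (n <= 2 ^ n)%N by apply: ltnW; apply: ltn_expl.
have hN : n%:R <= (2 ^ n)%:R :> R by rewrite ler_nat.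
have hbe := @bern _ e (2 ^ n) (ltW epos).
have := c3 n; rewrite (_ : r = 1 + e); last by rewrite /e addrC subrK.
move=> hc.
have : C * (e * Q) < n%:R * (e * Q) by rewrite ltr_pM2r // mulr_gt0.
rewrite /C divfK; last by rewrite gt_eqF // mulr_gt0.
have eq0 : 0 <= e * Q by apply: mulr_ge0; lra.
nra.
Qed.

End Main2.
Arguments key {R H ip A S Sstar Rop}.

Lemma normc_ge0 (R : realType) (c : R[i]) : 0 <= Normc.normc c.
Proof. by case: c => a b; apply: sqrtr_ge0. Qed.

Section Main3.
Variables (R : realType) (H : lmodType R[i]) (ip : H -> H -> R[i]).
Variables (A S Sstar Rop : H -> H).
Hypothesis hip : is_inner_product ip.
Hypothesis hA : positive_op ip A.
Hypothesis hadj : is_adjoint ip S Sstar.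
Hypothesis hS : bounded_op ip S.
Hypothesis hR : bounded_op ip Rop.
Hypothesis hAR : forall x, A (Rop x) = Sstar (A x).

Local Notation q := (q ip A).

Lemma Sbound : exists K : R, 0 <= K /\ forall x, q (S x) <= K * q x.
Proof.
have [b [hb hk]] := key hip hA hadj hS hR hAR.
exists b; split => // x.
have h := CSA_re hip hA (B S Rop x) x.
rewrite (Bform hip hadj hAR) in h.
have h1 := hk x.
have q0 := q_ge0 hA x; have q1 := q_ge0 hA (S x); have q2 := q_ge0 hA (B S Rop x).
rewrite -ler_sqr ?nnegrE ?mulr_ge0 // exprMn.
apply: le_trans h _.
rewrite [q x ^+ 2]expr2 mulrA.
by apply: ler_wpM2r.
Qed.

Let fA := fun x y => ip (A x) y.

Lemma qZ (t : R) y : q (Complex t 0 *: y) = t * t * q y.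
Proof.
change (complex.Re (fA (Complex t 0 *: y) (Complex t 0 *: y)) = t * t * complex.Re (fA y y)).
by rewrite (ReZl (f:=fA) (fAL hip hA)) (ReZr (f:=fA) (fAL hip hA) (fAH hip hA)) mulrA.
Qed.

Lemma q0 : q 0 = 0.
Proof.
change (complex.Re (ip (A 0) 0) = 0).
by rewrite (lin0 hA.1) (f0l (ipL hip)).
Qed.

Lemma sphereE z : A_sphere ip A z <-> q z = 1.
Proof.
rewrite /A_sphere /A_norm /A_ip /=; split => h.
  by rewrite -[q z](@sqr_sqrtr _ (q z)) ?q_ge0 //; change (Num.sqrt (q z) ^+ 2 = 1); rewrite h expr1n.
by change (Num.sqrt (q z) = 1); rewrite h sqrtr1.
Qed.

Variable M : R.
Hypothesis M0 : 0 <= M.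
Hypothesis hM : forall z, q z = 1 -> q (S z) <= M ^+ 2.
Variable K : R.
Hypothesis hK : forall x, q (S x) <= K * q x.

Lemma qS_all y : q (S y) <= M ^+ 2 * q y.
Proof.
have qy0 := q_ge0 hA y; have qSy0 := q_ge0 hA (S y).
have [qpos|qle] := ltP 0 (q y); last first.
  have e : q y = 0 by apply/le_anti/andP.
  have := hK y; rewrite e !mulr0 => h; exact: h.
set t := (Num.sqrt (q y))^-1.
have ht : t * t * q y = 1.
  by rewrite /t -expr2 exprVn sqr_sqrtr // mulVf // gt_eqF.
have h1 : q (Complex t 0 *: y) = 1 by rewrite qZ.
have := hM _ h1; rewrite (linZ _ _ hS) qZ => h2.
nra.
Qed.

Lemma qR_all w : q (Rop w) <= M ^+ 2 * q w.
Proof.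
have h := CSA_re hip hA w (S (Rop w)).
have e : complex.Re (ip (A w) (S (Rop w))) = q (Rop w).
  by change (complex.Re (ip (A w) (S (Rop w))) = complex.Re (ip (A (Rop w)) (Rop w)));
     rewrite hAR (adjS hip hadj).
rewrite e in h.
have h2 := qS_all (Rop w).
have a0 := q_ge0 hA (Rop w); have b0 := q_ge0 hA w; have m0 : 0 <= M ^+ 2 by apply: exprn_ge0.
have h3 : q (Rop w) ^+ 2 <= (M ^+ 2 * q w) * q (Rop w).
  apply: le_trans h _; apply: le_trans (ler_wpM2l b0 h2) _.
  by rewrite le_eqVlt; apply/orP; left; apply/eqP; ring.
have c0 : 0 <= M ^+ 2 * q w by apply: mulr_ge0.
have [xp|xle] := ltP 0 (q (Rop w)).
  by rewrite expr2 ler_pM2r in h3.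
by apply: le_trans xle c0.
Qed.

Lemma qSharp w : q (A_sharp ip A Sstar w) <= M ^+ 2 * q w.
Proof.
rewrite /A_sharp /MPinv.
set P := (X in xget 0 X).
have m0 : 0 <= M ^+ 2 by apply: exprn_ge0.
have [hex|hnex] := pselect (exists x, P x); last first.
  have -> : xget 0 P = 0 by apply: xgetPN => x hx; apply: hnex; exists x.
  by rewrite q0; apply: mulr_ge0 => //; apply: q_ge0.
have := xgetPex 0 hex; set x := xget 0 P => -[_ h2].
have := h2 (Rop w - x).
rewrite -hAR (linB _ _ hA.1) => /(ipD hip) /eqP; rewrite subr_eq0 => /eqP hx.
suff -> : q x = q (Rop w) by apply: qR_all.
change (complex.Re (fA x x) = complex.Re (fA (Rop w) (Rop w))).
rewrite /fA -hx; change (complex.Re (fA (Rop w) x) = complex.Re (fA (Rop w) (Rop w))).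
by rewrite (ReH (f:=fA) (fAH hip hA)) /fA /= -hx.
Qed.

End Main3.
Arguments sphereE {R H ip A}.

Theorem theorem2p11 (R : realType) (H : lmodType R[i]) (ip : H -> H -> R[i])
  (A S Sstar : H -> H) :
  is_complex_Hilbert ip ->
  positive_op ip A ->
  is_adjoint ip S Sstar ->
  in_BA ip A S Sstar ->
  A_davis_wielandt_radius ip A S ^+ 2 <=
    A_opnorm ip A S ^+ 4 + 2 * A_opnorm ip A S ^+ 2
    - Num.sqrt (A_crawford ip A (A_sharp ip A Sstar \o S)
                * A_crawford ip A (S \o A_sharp ip A Sstar)).
Proof.
move=> [hip _] hA hadj [hS [Rop [hR hAR]]].
have [K [K0 hK]] := @Sbound _ _ ip A S Sstar Rop hip hA hadj hS hR hAR.
have [[z0 hz0]|hemp] := pselect (exists z, A_sphere ip A z); last first.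
  have Esph : A_sphere ip A = set0.
    by rewrite predeqE => z; split => // hz; apply: hemp; exists z.
  rewrite /A_davis_wielandt_radius /A_opnorm /A_crawford Esph !image_set0 sup0 inf0.
  by rewrite mulr0 sqrtr0 subr0 !expr0n /= mulr0 addr0.
have hz0q : q ip A z0 = 1 := proj1 (sphereE hA z0) hz0.
have ubS : forall z, A_sphere ip A z -> A_norm ip A (S z) <= Num.sqrt K.
  move=> z /(sphereE hA) hz.
  change (Num.sqrt (q ip A (S z)) <= Num.sqrt K); apply: ler_wsqrtr.
  by have := hK z; rewrite hz mulr1.
have hsupS : has_sup [set A_norm ip A (S z) | z in A_sphere ip A]%classic.
  split; first by exists (A_norm ip A (S z0)); exists z0.
  by exists (Num.sqrt K) => _ [z hz <-]; exact: ubS.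
have hMge : forall z, A_sphere ip A z -> A_norm ip A (S z) <= A_opnorm ip A S.
  by move=> z hz; apply: (ub_le_sup hsupS.2); exists z.
set M := A_opnorm ip A S in hMge *.
have M0 : 0 <= M by apply: le_trans (hMge z0 hz0); apply: sqrtr_ge0.
have hM : forall z, q ip A z = 1 -> q ip A (S z) <= M ^+ 2.
  move=> z hz; have := hMge z (proj2 (sphereE hA z) hz).
  change (Num.sqrt (q ip A (S z)) <= M -> q ip A (S z) <= M ^+ 2) => h.
  rewrite -(sqr_sqrtr (q_ge0 hA (S z))).
  by rewrite ler_sqr ?nnegrE ?sqrtr_ge0.
have hSall := @qS_all _ _ ip A S hip hA hS M hM K hK.
have hSh := @qSharp _ _ ip A S Sstar Rop hip hA hadj hS hAR M M0 hM K hK.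
set N2 := M ^+ 2.
have N20 : 0 <= N2 by apply: exprn_ge0.
have ubD : forall z, A_sphere ip A z ->
    Num.sqrt (Normc.normc (A_ip ip A (S z) z) ^+ 2 + A_norm ip A (S z) ^+ 4)
    <= Num.sqrt (N2 ^+ 2 + N2).
  move=> z /(sphereE hA) hz; apply: ler_wsqrtr.
  have h1 := CSA hip hA (S z) z.
  rewrite hz mulr1 in h1.
  have h2 := hM z hz.
  have qs0 := q_ge0 hA (S z).
  have e4 : A_norm ip A (S z) ^+ 4 = q ip A (S z) ^+ 2.
    change (Num.sqrt (q ip A (S z)) ^+ (2 * 2) = q ip A (S z) ^+ 2).
    by rewrite exprM sqr_sqrtr.
  rewrite e4.
  have h3 : q ip A (S z) ^+ 2 <= N2 ^+ 2 by rewrite ler_sqr ?nnegrE.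
  have h2n : q ip A (S z) <= N2 := h2.
  rewrite /A_ip; lra.
have hsupD : has_sup [set Num.sqrt (Normc.normc (A_ip ip A (S z) z) ^+ 2
      + A_norm ip A (S z) ^+ 4) | z in A_sphere ip A]%classic.
  split; first by eexists; exists z0.
  by exists (Num.sqrt (N2 ^+ 2 + N2)) => _ [z hz <-]; exact: ubD.
have D0 : 0 <= A_davis_wielandt_radius ip A S.
  have h := ub_le_sup hsupD.2 (ex_intro2 _ _ z0 hz0 erefl).
  exact: le_trans (sqrtr_ge0 _) h.
have DU : A_davis_wielandt_radius ip A S <= Num.sqrt (N2 ^+ 2 + N2).
  apply: ge_sup; first by eexists; exists z0.
  by move=> _ [z hz <-]; exact: ubD.
have D2 : A_davis_wielandt_radius ip A S ^+ 2 <= N2 ^+ 2 + N2.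
  rewrite -[X in _ <= X](@sqr_sqrtr _ (N2 ^+ 2 + N2)); last first.
    by apply: addr_ge0 => //; apply: exprn_ge0.
  by rewrite ler_sqr ?nnegrE ?sqrtr_ge0.
have crw : forall T : H -> H,
    Normc.normc (ip (A (T z0)) z0) <= N2 ->
    0 <= A_crawford ip A T <= N2.
  move=> T hT.
  have hlb : (lbound [set Normc.normc (A_ip ip A (T z) z) | z in A_sphere ip A]%classic) 0.
    by move=> _ [z hz <-]; exact: normc_ge0.
  apply/andP; split.
    by apply: lb_le_inf => //; eexists; exists z0.
  apply: le_trans hT.
  by apply: (ge_inf (ex_intro _ 0 hlb)); exists z0.
have v1 : Normc.normc (ip (A ((A_sharp ip A Sstar \o S) z0)) z0) <= N2.
  have h := CSA hip hA ((A_sharp ip A Sstar \o S) z0) z0.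
  rewrite hz0q mulr1 /= in h.
  have h2 := hSh (S z0).
  have h3 := hM z0 hz0q.
  rewrite -ler_sqr ?nnegrE ?normc_ge0 //.
  apply: le_trans h _; apply: le_trans h2 _.
  by rewrite [N2 ^+ 2]expr2; apply: ler_wpM2l.
have v2 : Normc.normc (ip (A ((S \o A_sharp ip A Sstar) z0)) z0) <= N2.
  have h := CSA hip hA ((S \o A_sharp ip A Sstar) z0) z0.
  rewrite hz0q mulr1 /= in h.
  have h2 := hSall (A_sharp ip A Sstar z0).
  have h3 := hSh z0; rewrite hz0q mulr1 in h3.
  rewrite -ler_sqr ?nnegrE ?normc_ge0 //.
  apply: le_trans h _; apply: le_trans h2 _.
  by rewrite [N2 ^+ 2]expr2; apply: ler_wpM2l.
have /andP[c10 c1N] := crw _ v1.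
have /andP[c20 c2N] := crw _ v2.
have hsq : Num.sqrt (A_crawford ip A (A_sharp ip A Sstar \o S)
                * A_crawford ip A (S \o A_sharp ip A Sstar)) <= N2.
  have : A_crawford ip A (A_sharp ip A Sstar \o S)
                * A_crawford ip A (S \o A_sharp ip A Sstar) <= N2 ^+ 2.
    by rewrite expr2; apply: ler_pM.
  move=> /ler_wsqrtr; rewrite sqrtr_sqr ger0_norm //.
have -> : M ^+ 4 = N2 ^+ 2 by rewrite /N2 -exprM.
lra.
Qed.
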